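(* Let $R$ be a conformal superalgebra and let $0\to M\xrightarrow{d_1}N\xrightarrow{d_2}P\to0$ be an exact sequence of $R$-modules such that for every morphism $T:X\to Y$ in this sequence (including $0\to M$ and $P\to 0$), $Y/T(X)$ is a finitely generated torsion-free $\mathbb C[\partial]$-module. Then the dual sequence $0\to P^*\xrightarrow{d_2^*}N^*\xrightarrow{d_1^*}M^*\to0$ is exact.
   Context: A conformal superalgebra $R$ is a $\mathbb Z_2$-graded $\mathbb C[\partial]$-module with a $\mathbb C$-linear $\lambda$-bracket $R\otimes R\to\mathbb C[\lambda]\otimes R$ satisfying $[\partial a_\lambda b]=-\lambda[a_\lambda b]$, $[a_\lambda\partial b]=(\lambda+\partial)[a_\lambda b]$, $[a_\lambda b]=-(-1)^{p(a)p(b)}[b_{-\lambda-\partial}a]$ and $[a_\lambda[b_\mu c]]=[[a_\lambda b]_{\lambda+\mu}c]+(-1)^{p(a)p(b)}[b_\mu[a_\lambda c]]$. An $R$-module $M$ is a $\mathbb Z_2$-graded $\mathbb C[\partial]$-module with a $\lambda$-action $a_\lambda v=\sum_{n\ge0}\frac{\lambda^n}{n!}a_{(n)}v$ satisfying the usual axioms; a morphism $T:M\to N$ of $R$-modules is a linear map with $T(\partial m)=\partial T(m)$ and $T(a_\lambda m)=a_\lambda T(m)$. The conformal dual is $M^*=\{f_\lambda:M\to\mathbb C[\lambda]\mid f_\lambda(\partial m)=\lambda f_\lambda(m)\}$ with $(\partial f)_\lambda(m)=-\lambda f_\lambda(m)$ and $(a_\lambda f)_\mu(m)=-(-1)^{p(a)p(f)}f_{\mu-\lambda}(a_\lambda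 m)$. The dual morphism $T^*:N^*\to M^*$ is $[T^*(f)]_\lambda(m)=-f_\lambda(T(m))$. *)

(* Defs.v *)
From HB Require Import structures.
From mathcomp Require Import all_boot all_order all_algebra.
From mathcomp Require Import complex.
From mathcomp Require Import reals Rstruct.

Set Implicit Arguments.
Unset Strict Implicit.
Unset Printing Implicit Defensive.

Import Order.TTheory GRing.Theory Num.Theory.
Local Open Scope ring_scope.

Notation CC := (Rdefinitions.R[i]).

Definition clinear (U V : lmodType CC) (f : U -> V) : Prop :=
  GRing.linear_for *:%R f.

(* ---------- Z_2-graded C[∂]-modules ----------
   A Z_2-grading V = V_0 (+) V_1 is encoded by the parity involution
   par (par = id on V_0, par = -id on V_1); v is homogeneous of parity
   p : bool iff par v = (-1)^p v.  The action of ∂ is a C-linear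
   endomorphism dd preserving the grading. *)
Record gdmod (V : lmodType CC) := GDmod {
  dd : V -> V;
  par : V -> V;
  dd_lin : clinear dd;
  par_lin : clinear par;
  par_invol : forall v, par (par v) = v;
  par_dd : forall v, par (dd v) = dd (par v)
}.

Definition is_hom (V : lmodType CC) (G : gdmod V) (p : bool) (v : V) : Prop :=
  par G v = (-1) ^+ p *: v.

Definition psign (p q : bool) : CC := (-1) ^+ (p && q).

Definition pact (V : lmodType CC) (G : gdmod V) (q : {poly CC}) (v : V) : V :=
  \sum_(i < size q) q`_i *: iter i (dd G) v.

(* ---------- conformal superalgebras ----------
   The lambda-bracket [a_λ b] = \sum_{n>=0} λ^n/n! a_(n) b (an element of
   C[λ] ⊗ R) is encoded by its coefficients, the n-th products a_(n) b
   = br n a b, which vanish for n large.  The four axioms of the paper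
   are written coefficientwise (for homogeneous a, b, c where a sign
   occurs). *)
Record confsuperalg (R : lmodType CC) := ConfSuperalg {
  rgr : gdmod R;
  br : nat -> R -> R -> R;
  br_linr : forall n a, clinear (br n a);
  br_linl : forall n b, clinear (fun a => br n a b);
  br_fin : forall a b, exists N, forall n, (N <= n)%N -> br n a b = 0;
  br_par : forall p q a b n, is_hom rgr p a -> is_hom rgr q b ->
             is_hom rgr (p (+) q) (br n a b);
  (* [∂a_λ b] = -λ [a_λ b] *)
  br_ddl0 : forall a b, br 0 (dd rgr a) b = 0;
  br_ddl : forall n a b, br n.+1 (dd rgr a) b = - (n.+1)%:R *: br n a b;
  (* [a_λ ∂b] = (λ+∂) [a_λ b] *)
  br_ddr0 : forall a b, br 0 a (dd rgr b) = dd rgr (br 0 a b);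
  br_ddr : forall n a b,
      br n.+1 a (dd rgr b) = dd rgr (br n.+1 a b) + (n.+1)%:R *: br n a b;
  (* [a_λ b] = -(-1)^{p(a)p(b)} [b_{-λ-∂} a] *)
  br_skew : forall p q a b n N, is_hom rgr p a -> is_hom rgr q b ->
      (forall k, (N <= k)%N -> br k b a = 0) ->
      br n a b = - psign p q *:
        \sum_(i < N) (((-1) ^+ (n + i) / (i`!)%:R) *: iter i (dd rgr) (br (n + i) b a));
  (* [a_λ [b_μ c]] = [[a_λ b]_{λ+μ} c] + (-1)^{p(a)p(b)} [b_μ [a_λ c]] *)
  br_jacobi : forall p q a b c m n, is_hom rgr p a -> is_hom rgr q b ->
      br m a (br n b c) =
        \sum_(j < m.+1) ('C(m, j))%:R *: br (m + n - j) (br j a b) c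
        + psign p q *: br n b (br m a c)
}.

(* ---------- modules over a conformal superalgebra ----------
   a_λ v = \sum_{n>=0} λ^n/n! a_(n) v, encoded by the n-th actions
   act n a v = a_(n) v. *)
Record cmodule (R : lmodType CC) (A : confsuperalg R) (M : lmodType CC) :=
  CModule {
  mgr : gdmod M;
  act : nat -> R -> M -> M;
  act_linr : forall n a, clinear (act n a);
  act_linl : forall n v, clinear (fun a => act n a v);
  act_fin : forall a v, exists N, forall n, (N <= n)%N -> act n a v = 0;
  act_par : forall p q a v n, is_hom (rgr A) p a -> is_hom mgr q v ->
             is_hom mgr (p (+) q) (act n a v);
  (* (∂a)_λ v = -λ a_λ v *)
  act_ddl0 : forall a v, act 0 (dd (rgr A) a) v = 0;
  act_ddl : forall n a v,
      act n.+1 (dd (rgr A) a) v = - (n.+1)%:R *: act n a v;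
  (* a_λ (∂v) = (λ+∂) a_λ v *)
  act_ddr0 : forall a v, act 0 a (dd mgr v) = dd mgr (act 0 a v);
  act_ddr : forall n a v,
      act n.+1 a (dd mgr v) = dd mgr (act n.+1 a v) + (n.+1)%:R *: act n a v;
  (* a_λ (b_μ v) - (-1)^{p(a)p(b)} b_μ (a_λ v) = [a_λ b]_{λ+μ} v *)
  act_jacobi : forall p q a b v m n, is_hom (rgr A) p a -> is_hom (rgr A) q b ->
      act m a (act n b v) - psign p q *: act n b (act m a v) =
        \sum_(j < m.+1) ('C(m, j))%:R *: act (m + n - j) (br A j a b) v
}.

Definition cmorphism (R : lmodType CC) (A : confsuperalg R)
    (M N : lmodType CC) (SM : cmodule A M) (SN : cmodule A N) (T : M -> N)
    : Prop :=
  [/\ clinear T,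
      forall m, T (dd (mgr SM) m) = dd (mgr SN) (T m) &
      forall n a m, T (act SM n a m) = act SN n a (T m)].

Definition short_exact (M N P : lmodType CC) (d1 : M -> N) (d2 : N -> P)
    : Prop :=
  [/\ injective d1,
      forall n, d2 n = 0 <-> (exists m, n = d1 m) &
      forall p, exists n, p = d2 n].

(* "Y / T(X) is a finitely generated torsion-free C[∂]-module", where
   S is the underlying set of the submodule T(X) of Y. *)
Definition fg_quot (Y : lmodType CC) (G : gdmod Y) (S : Y -> Prop) : Prop :=
  exists gens : seq Y, forall y, exists (cs : seq {poly CC}) (s : Y),
    S s /\ y = \sum_(i < size gens) pact G cs`_i gens`_i + s.
Definition tf_quot (Y : lmodType CC) (G : gdmod Y) (S : Y -> Prop) : Prop :=
  forall (q : {poly CC}) (y : Y), q != 0 -> S (pact G q y) -> S y.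
Definition fg_tf_quot (Y : lmodType CC) (G : gdmod Y) (S : Y -> Prop) : Prop :=
  fg_quot G S /\ tf_quot G S.

Definition img (X Y : Type) (T : X -> Y) : Y -> Prop :=
  fun y => exists x, y = T x.

Definition cdual (M : lmodType CC) (G : gdmod M) (f : M -> {poly CC}) : Prop :=
  clinear f /\ forall m, f (dd G m) = 'X * f m.

Definition dualmap (M N : Type) (T : M -> N) (f : N -> {poly CC})
    : M -> {poly CC} := fun m => - f (T m).

Definition dual_short_exact (M N P : lmodType CC)
    (GM : gdmod M) (GN : gdmod N) (GP : gdmod P)
    (d1 : M -> N) (d2 : N -> P) : Prop :=
  [/\
      forall f, cdual GP f ->
        (forall n, dualmap d2 f n = 0) -> forall p, f p = 0,
      forall g, cdual GN g ->
        ((forall m, dualmap d1 g m = 0) <->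
         exists2 f, cdual GP f & forall n, g n = dualmap d2 f n) &
      forall h, cdual GM h ->
        exists2 g, cdual GN g & forall m, h m = dualmap d1 g m].

(* Main.v *)
Require Import Defs.
From HB Require Import structures.
From mathcomp Require Import all_boot all_order all_algebra.
From mathcomp Require Import complex.
From mathcomp Require Import reals Rstruct.
From Stdlib Require Import ClassicalEpsilon.
From mathcomp Require Import ring.
Set Implicit Arguments.
Unset Strict Implicit.
Unset Printing Implicit Defensive.
Import Order.TTheory GRing.Theory Num.Theory.
Local Open Scope ring_scope.

Section Lin.
Variables (U W : lmodType CC) (f : U -> W).
Hypothesis hf : clinear f.
Lemma cl0 : f 0 = 0.
Proof.
have h := hf 1 0 0; rewrite !scale1r addr0 in h.
by apply: (addrI (f 0)); rewrite addr0 -h.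
Qed.
Lemma clD x y : f (x + y) = f x + f y.
Proof. by have := hf 1 x y; rewrite !scale1r. Qed.
Lemma clZ a x : f (a *: x) = a *: f x.
Proof. by have := hf a x 0; rewrite !addr0 cl0 addr0. Qed.
Lemma clN x : f (- x) = - f x.
Proof. by rewrite -scaleN1r clZ scaleN1r. Qed.
Lemma clB x y : f (x - y) = f x - f y.
Proof. by rewrite clD clN. Qed.
Lemma clsum I (r : seq I) (P : pred I) (F : I -> U) :
  f (\sum_(i <- r | P i) F i) = \sum_(i <- r | P i) f (F i).
Proof. exact: (big_morph f clD cl0). Qed.
End Lin.

Section Pact.
Variables (V : lmodType CC) (G : gdmod V).
Local Notation D := (dd G).
Local Notation pa := (pact G).
Implicit Types (p q : {poly CC}) (u v w x y : V).

Lemma iterD_lin i : clinear (iter i D).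
Proof.
elim: i => [|i IH] a u v //=.
by rewrite IH (dd_lin G).
Qed.

Lemma pact_widen p v k :
  pa p v = \sum_(i < size p + k) p`_i *: iter i D v.
Proof.
elim: k => [|k IH]; first by rewrite addn0.
rewrite addnS big_ord_recr /= -IH nth_default ?scale0r ?addr0 //.
exact: leq_addr.
Qed.

Lemma pact_n p v n : (size p <= n)%N ->
  pa p v = \sum_(i < n) p`_i *: iter i D v.
Proof. by move=> h; rewrite (pact_widen p v (n - size p)) subnKC. Qed.

Lemma pact0 v : pa 0 v = 0.
Proof. by rewrite /pact size_poly0 big_ord0. Qed.

Lemma pactD p q v : pa (p + q) v = pa p v + pa q v.
Proof.
set n := maxn (size p) (size q).
rewrite (pact_n v (size_add p q)) (@pact_n p v n) ?leq_maxl //.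
rewrite (@pact_n q v n) ?leq_maxr // -big_split /=.
by apply: eq_bigr => i _; rewrite coefD scalerDl.
Qed.

Lemma pactZp c p v : pa (c *: p) v = c *: pa p v.
Proof.
rewrite (pact_n v (size_scale_leq c p)) /pact scaler_sumr.
by apply: eq_bigr => i _; rewrite coefZ scalerA.
Qed.

Lemma pact_lin p : clinear (pa p).
Proof.
move=> a u w; rewrite /pact scaler_sumr -big_split /=.
apply: eq_bigr => i _; rewrite iterD_lin scalerDr !scalerA mulrC //.
Qed.

Lemma pactC c v : pa c%:P v = c *: v.
Proof.
rewrite (@pact_n _ _ 1) ?size_polyC ?leq_b1 //.
by rewrite big_ord1 coefC /=.
Qed.

Lemma pact1 v : pa 1 v = v.
Proof. by rewrite pactC scale1r. Qed.

Lemma pact_mulX p v : pa (p * 'X) v = pa p (D v).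
Proof.
rewrite (@pact_n _ _ (size p).+1); last first.
  apply: leq_trans (size_polyMleq _ _) _; by rewrite size_polyX addn2.
rewrite big_ord_recl coefMX /= scale0r add0r /pact.
by apply: eq_bigr => i _; rewrite coefMX /= add0n -iterS iterSr.
Qed.

Lemma dd_pact p v : D (pa p v) = pa p (D v).
Proof.
rewrite /pact (clsum (dd_lin G)); apply: eq_bigr => i _.
by rewrite (clZ (dd_lin G)) -iterS iterSr.
Qed.

Lemma pactX v : pa 'X v = D v.
Proof. by rewrite -(mul1r 'X) pact_mulX pact1. Qed.

Lemma pactM p q v : pa (p * q) v = pa p (pa q v).
Proof.
elim/poly_ind: p q v => [|p c IH] q v; first by rewrite mul0r !pact0.
rewrite mulrDl pactD mulrAC pact_mulX IH pactD pact_mulX dd_pact.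
by rewrite mul_polyC pactZp !pactC.
Qed.

Lemma pact_comm p q v : pa p (pa q v) = pa q (pa p v).
Proof. by rewrite -!pactM mulrC. Qed.

Lemma pactvD p x y : pa p (x + y) = pa p x + pa p y.
Proof. exact: (clD (pact_lin p) x y). Qed.
Lemma pactvB p x y : pa p (x - y) = pa p x - pa p y.
Proof. exact: (clB (pact_lin p) x y). Qed.
Lemma pactv0 p : pa p 0 = 0.
Proof. exact: (cl0 (pact_lin p)). Qed.
Lemma pactvZ p a x : pa p (a *: x) = a *: pa p x.
Proof. exact: (clZ (pact_lin p) a x). Qed.

End Pact.

Section Decomp.
Variables (V : lmodType CC) (G : gdmod V).
Local Notation D := (dd G).
Local Notation pa := (pact G).
Implicit Types (p q : {poly CC}) (u v w x y : V) (S T : V -> Prop).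

Definition submod S := [/\ S 0, (forall x y, S x -> S y -> S (x + y)),
  (forall (c : CC) x, S x -> S (c *: x)) & (forall x, S x -> S (D x))].
Definition satur S := forall q y, q != 0 -> S (pa q y) -> S y.

Section SM.
Variable S : V -> Prop.
Hypothesis sS : submod S.
Lemma sm0 : S 0. Proof. by case: sS. Qed.
Lemma smD x y : S x -> S y -> S (x + y). Proof. by case: sS => _ h _ _; apply: h. Qed.
Lemma smZ c x : S x -> S (c *: x). Proof. by case: sS => _ _ h _; apply: h. Qed.
Lemma smDD x : S x -> S (D x). Proof. by case: sS => _ _ _ h; apply: h. Qed.
Lemma smN x : S x -> S (- x). Proof. by move=> h; rewrite -scaleN1r; apply: smZ. Qed.
Lemma smB x y : S x -> S y -> S (x - y). Proof. by move=> hx hy; apply: smD => //; apply: smN. Qed.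
Lemma sm_iter i x : S x -> S (iter i D x).
Proof. by elim: i => [|i IH] //= hx; apply: smDD; apply: IH. Qed.
Lemma sm_sum I (r : seq I) (P : pred I) (F : I -> V) :
  (forall i, P i -> S (F i)) -> S (\sum_(i <- r | P i) F i).
Proof. by move=> h; apply: big_ind => //; [exact: sm0 | exact: smD]. Qed.
Lemma smP p x : S x -> S (pa p x).
Proof. by move=> hx; apply: sm_sum => i _; apply: smZ; apply: sm_iter. Qed.
End SM.

Definition satg S g x := exists q r, q != 0 /\ S (pa q x - pa r g).

Lemma pact_sum I (r : seq I) (P : pred I) (F : I -> {poly CC}) x :
  pa (\sum_(i <- r | P i) F i) x = \sum_(i <- r | P i) pa (F i) x.
Proof. exact: (big_morph (fun p => pa p x) (fun p q => pactD G p q x) (pact0 G x)). Qed.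

Lemma satg_sub S g : submod S -> submod (satg S g).
Proof.
move=> sS; split.
- exists 1, 0; split; first exact: oner_neq0.
  by rewrite pactv0 pact0 subr0; apply: (sm0 sS).
- move=> x y [q1 [r1 [h1 s1]]] [q2 [r2 [h2 s2]]].
  exists (q1 * q2), (q2 * r1 + q1 * r2); split; first by rewrite mulf_neq0.
  have -> : pa (q1 * q2) (x + y) - pa (q2 * r1 + q1 * r2) g =
     pa q2 (pa q1 x - pa r1 g) + pa q1 (pa q2 y - pa r2 g).
    rewrite !pactvB pactvD pactD -!pactM [q1 * q2]mulrC.
    by rewrite opprD addrACA.
  by apply: (smD sS); apply: (smP sS).
- move=> c x [q [r [h s]]]; exists q, (c *: r); split => //.
  by rewrite pactvZ pactZp -scalerBr; apply: (smZ sS).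
- move=> x [q [r [h s]]]; exists q, (r * 'X); split => //.
  by rewrite pact_mulX -!dd_pact -(clB (dd_lin G)); apply: (smDD sS).
Qed.

Lemma satg_sat S g : satur (satg S g).
Proof.
move=> p y hp [q [r [h s]]]; exists (q * p), r; split; first by rewrite mulf_neq0.
by rewrite pactM.
Qed.

Lemma satg_S S g x : submod S -> S x -> satg S g x.
Proof.
move=> sS hx; exists 1, 0; split; first exact: oner_neq0.
by rewrite pact1 pact0 subr0.
Qed.

Lemma satg_g S g : submod S -> satg S g g.
Proof.
move=> sS; exists 1, 1; split; first exact: oner_neq0.
by rewrite subrr; apply: (sm0 sS).
Qed.

Lemma satdiff S Q a g x y : submod S -> satur S -> Q != 0 ->
  S (pa Q x - pa a g) -> S (pa Q y - pa a g) -> S (x - y).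
Proof.
move=> sS tS hQ h1 h2; apply: (tS Q) => //.
have -> : pa Q (x - y) = (pa Q x - pa a g) - (pa Q y - pa a g).
  by rewrite pactvB opprB addrA subrK.
exact: (smB sS).
Qed.



Lemma rank1core S g (z : nat -> V) m : submod S -> satur S ->
  (forall j, (j < m)%N -> satg S g (z j)) ->
  exists e (c : nat -> {poly CC}) Q d, [/\ Q != 0, S (pa Q e - pa d g),
     satg S g e & forall j, (j < m)%N -> S (z j - pa (c j) e)].
Proof.
move=> sS tS; elim: m => [|m IH] hz.
  exists 0, (fun _ => 0), 1, 0; split => //; first exact: oner_neq0.
  - by rewrite pactv0 pact0 subr0; apply: (sm0 sS).
  - exact: (satg_S g sS (sm0 sS)).
have [e [c [Q [d [Q0 hQ he hc]]]]] := IH (fun j hj => hz j (leqW hj)).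
have [q [r [q0 hq]]] := hz m (ltnSn m).
set a := q * d; set b := Q * r.
set u := (egcdp a b).1; set v := (egcdp a b).2; set d' := u * a + v * b.
have da : d' %| a by rewrite -(eqp_dvdl _ (egcdpE a b)) dvdp_gcdl.
have db : d' %| b by rewrite -(eqp_dvdl _ (egcdpE a b)) dvdp_gcdr.
set e' := pa u e + pa v (z m).
have Q'0 : Q * q != 0 by rewrite mulf_neq0.
have he' : S (pa (Q * q) e' - pa d' g).
  have -> : pa (Q * q) e' - pa d' g =
      pa (u * q) (pa Q e - pa d g) + pa (v * Q) (pa q (z m) - pa r g).
    rewrite /e' pactvD !pactvB pactD -!pactM /d' /a /b.
    have -> : Q * q * u = u * q * Q by ring.
    have -> : Q * q * v = v * Q * q by ring.
    have -> : u * (q * d) = u * q * d by ring.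
    have -> : v * (Q * r) = v * Q * r by ring.
    by rewrite opprD addrACA.
  by apply: (smD sS); apply: (smP sS).
have ee : S (e - pa (a %/ d') e').
  apply: (satdiff (Q := Q * q) (a := a) (g := g) sS tS Q'0).
    have -> : pa (Q * q) e - pa a g = pa q (pa Q e - pa d g).
      by rewrite pactvB -!pactM [Q * q]mulrC.
    exact: (smP sS).
  have -> : pa (Q * q) (pa (a %/ d') e') - pa a g =
      pa (a %/ d') (pa (Q * q) e' - pa d' g).
    by rewrite pactvB -!pactM divpK // [_ * (Q * q)]mulrC.
  exact: (smP sS).
have ez : S (z m - pa (b %/ d') e').
  apply: (satdiff (Q := Q * q) (a := b) (g := g) sS tS Q'0).
    have -> : pa (Q * q) (z m) - pa b g = pa Q (pa q (z m) - pa r g).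
      by rewrite pactvB -!pactM.
    exact: (smP sS).
  have -> : pa (Q * q) (pa (b %/ d') e') - pa b g =
      pa (b %/ d') (pa (Q * q) e' - pa d' g).
    by rewrite pactvB -!pactM divpK // [_ * (Q * q)]mulrC.
  exact: (smP sS).
exists e', (fun j => if (j < m)%N then c j * (a %/ d') else b %/ d'), (Q * q), d'.
split => //.
  apply: (smD (satg_sub g sS)); apply: (smP (satg_sub g sS)) => //.
  exact: hz.
move=> j hj; case: ltnP => hjm.
  have -> : z j - pa (c j * (a %/ d')) e' =
     (z j - pa (c j) e) + pa (c j) (e - pa (a %/ d') e').
    by rewrite pactvB pactM addrA subrK.
  by apply: (smD sS); [exact: hc | exact: (smP sS)].
have -> : j = m by apply/eqP; rewrite eqn_leq hjm -ltnS hj.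
exact: ez.
Qed.



Lemma rank1 S g (z : nat -> V) m : submod S -> satur S ->
  (forall j, (j < m)%N -> satg S g (z j)) ->
  exists e (c : nat -> {poly CC}), [/\ satg S g e,
     (forall j, (j < m)%N -> S (z j - pa (c j) e)) &
     (forall p, S (pa p e) -> pa p e = 0)].
Proof.
move=> sS tS hz.
have [e [c [Q [d [Q0 hQ he hc]]]]] := rank1core sS tS hz.
case: (classic (S e)) => hSe.
  exists 0, c; split.
  - exact: (sm0 (satg_sub g sS)).
  - move=> j hj; rewrite pactv0 subr0.
    have -> : z j = (z j - pa (c j) e) + pa (c j) e by rewrite subrK.
    by apply: (smD sS); [exact: hc | exact: (smP sS)].
  - by move=> p _; rewrite pactv0.
exists e, c; split => // p hp.
case: (eqVneq p 0) => [->|p0]; first by rewrite pact0.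
by case: hSe; apply: (tS p).
Qed.

Lemma compl (gs : seq V) : forall S, submod S -> satur S ->
  (forall n, exists (cs : nat -> {poly CC}) s,
      S s /\ n = \sum_(i < size gs) pa (cs i) gs`_i + s) ->
  exists T, [/\ submod T, (forall t, S t -> T t -> t = 0) &
    (forall n, exists s t, [/\ S s, T t & n = s + t])].
Proof.
elim: gs => [|g gs IH] S sS tS hsp.
  exists (fun t => t = 0); split => //.
  - split => //.
    + by move=> x y -> ->; rewrite addr0.
    + by move=> c x ->; rewrite scaler0.
    + by move=> x ->; exact: (cl0 (dd_lin G)).
  - move=> n; have [cs [s [hs ->]]] := hsp n.
    by exists s, 0; rewrite big_ord0 add0r addr0.
pose S1 := satg S g.
have sS1 : submod S1 := satg_sub g sS.
have tS1 : satur S1 := @satg_sat S g.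
have hsp1 : forall n, exists (cs : nat -> {poly CC}) s,
    S1 s /\ n = \sum_(i < size gs) pa (cs i) gs`_i + s.
  move=> n; have [cs [s [hs ->]]] := hsp n.
  exists (fun i => cs i.+1), (pa (cs 0%N) g + s); split.
    apply: (smD sS1); first exact: (smP sS1 _ (satg_g g sS)).
    exact: (satg_S g sS hs).
  rewrite big_ord_recl /= addrA [pa _ g + _]addrC -addrA.
  done.
have [T1 [sT1 hST1 hdec1]] := IH S1 sS1 tS1 hsp1.
set gs' := g :: gs.
pose z j := epsilon (inhabits 0) (fun x => S1 x /\ T1 (gs'`_j - x)).
have hz : forall j, S1 (z j) /\ T1 (gs'`_j - z j).
  move=> j; apply: (epsilon_spec (inhabits 0) (fun x => S1 x /\ T1 (gs'`_j - x))).
  have [s [t [hs ht e]]] := hdec1 (gs'`_j).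
  by exists s; split => //; rewrite e [s + t]addrC addrK.
have [e [c [he hc hind]]] := @rank1 S g z (size gs') sS tS (fun j _ => (hz j).1).
have gen : forall x, S1 x -> exists p, S (x - pa p e).
  move=> x hx; have [a [s [hs hxe]]] := hsp x.
  have E : \sum_(i < size gs') pa (a i) (gs'`_i - z i) = 0.
    apply: hST1; last first.
      by apply: (sm_sum sT1) => i _; apply: (smP sT1); exact: (hz i).2.
    have -> : \sum_(i < size gs') pa (a i) (gs'`_i - z i) =
        x - s - \sum_(i < size gs') pa (a i) (z i).
      rewrite hxe addrK -sumrB; apply: eq_bigr => i _; exact: pactvB.
    apply: (smB sS1); first apply: (smB sS1) => //; first exact: (satg_S g sS hs).
    by apply: (sm_sum sS1) => i _; apply: (smP sS1); exact: (hz i).1.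
  exists (\sum_(i < size gs') a i * c i).
  have -> : x - pa (\sum_(i < size gs') a i * c i) e =
      s + \sum_(i < size gs') pa (a i) (z i - pa (c i) e).
    rewrite pact_sum.
    under [in RHS]eq_bigr => i _ do rewrite pactvB -pactM.
    rewrite sumrB.
    move/eqP: E; rewrite (eq_bigr (fun i : 'I_(size gs') => pa (a i) gs'`_i - pa (a i) (z i))); last first.
      by move=> i _; rewrite pactvB.
    rewrite sumrB subr_eq0 => /eqP E.
    by rewrite hxe E -addrA addrCA.
  apply: (smD sS) => //; apply: (sm_sum sS) => i _.
  exact: (smP sS _ (hc i (ltn_ord i))).
exists (fun x => exists p t, T1 t /\ x = pa p e + t); split.
- split.
  + by exists 0, 0; split; [exact: (sm0 sT1) | rewrite pact0 addr0].
  + move=> x y [p1 [t1 [h1 ->]]] [p2 [t2 [h2 ->]]].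
    exists (p1 + p2), (t1 + t2); split; first exact: (smD sT1).
    by rewrite pactD addrACA.
  + move=> k x [p [t [h ->]]]; exists (k *: p), (k *: t); split.
      exact: (smZ sT1).
    by rewrite pactZp scalerDr.
  + move=> x [p [t [h ->]]]; exists (p * 'X), (D t); split.
      exact: (smDD sT1).
    by rewrite (clD (dd_lin G)) dd_pact pact_mulX.
- move=> x hx [p [t [ht hxe]]].
  have t0 : t = 0.
    apply: hST1 => //.
    have -> : t = x - pa p e by rewrite hxe [pa p e + t]addrC addrK.
    apply: (smB sS1); [exact: (satg_S g sS hx) | exact: (smP sS1)].
  move: hxe; rewrite t0 addr0 => hxe.
  by rewrite hxe; apply: hind; rewrite -hxe.
- move=> n; have [s1 [t1 [hs1 ht1 ->]]] := hdec1 n.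
  have [p hp] := gen s1 hs1.
  exists (s1 - pa p e), (pa p e + t1); split => //.
    by exists p, t1.
  by rewrite addrA subrK.
Qed.

Lemma extend S T (phi : V -> {poly CC}) : submod S -> submod T ->
  (forall t, S t -> T t -> t = 0) ->
  (forall n, exists s t, [/\ S s, T t & n = s + t]) ->
  (forall a s s', S s -> S s' -> phi (a *: s + s') = a *: phi s + phi s') ->
  (forall s, S s -> phi (D s) = 'X * phi s) ->
  exists g, cdual G g /\ forall s, S s -> g s = phi s.
Proof.
move=> sS sT hST hdec hl hd.
pose pr n := epsilon (inhabits 0) (fun s => S s /\ T (n - s)).
have prs n : S (pr n) /\ T (n - pr n).
  apply: (epsilon_spec (inhabits 0) (fun s => S s /\ T (n - s))).
  have [s [t [hs ht ->]]] := hdec n.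
  by exists s; split => //; rewrite [s + t]addrC addrK.
have pru n s : S s -> T (n - s) -> pr n = s.
  move=> hs ht; case: (prs n) => h1 h2; apply/eqP; rewrite -subr_eq0; apply/eqP.
  apply: hST; first exact: (smB sS).
  have -> : pr n - s = (n - s) - (n - pr n) by rewrite opprB [in RHS]addrC addrA subrK.
  exact: (smB sT).
exists (fun n => phi (pr n)); split; last first.
  by move=> s hs; rewrite (pru s s hs) // subrr; exact: (sm0 sT).
split.
- move=> a u w /=.
  case: (prs u) => hu1 hu2; case: (prs w) => hw1 hw2.
  rewrite (pru (a *: u + w) (a *: pr u + pr w)).
  + by apply: hl.
  + by apply: (smD sS) => //; apply: (smZ sS).
  + rewrite opprD addrACA -scalerBr.
    by apply: (smD sT) => //; apply: (smZ sT).
- move=> m /=.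
  case: (prs m) => hm1 hm2.
  rewrite (pru (D m) (D (pr m))); first by rewrite hd.
    exact: (smDD sS).
  by rewrite -(clB (dd_lin G)); exact: (smDD sT).
Qed.

End Decomp.

Theorem proposition2p19 (R : lmodType CC) (A : confsuperalg R)
    (M N P : lmodType CC)
    (SM : cmodule A M) (SN : cmodule A N) (SP : cmodule A P)
    (d1 : M -> N) (d2 : N -> P) :
  cmorphism SM SN d1 -> cmorphism SN SP d2 ->
  short_exact d1 d2 ->
  (* 0 -> M :  M / 0 *)
  fg_tf_quot (mgr SM) (fun m => m = 0) ->
  (* M -> N :  N / d1(M) *)
  fg_tf_quot (mgr SN) (img d1) ->
  (* N -> P :  P / d2(N) *)
  fg_tf_quot (mgr SP) (img d2) ->
  dual_short_exact (mgr SM) (mgr SN) (mgr SP) d1 d2.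
Proof.
move=> [l1 dd1 act1] [l2 dd2 act2] [inj1 ex2 surj2] _ [fgN tfN] _.
split.
- move=> f [lf df] hf p; have [n ->] := surj2 p.
  by have := hf n; rewrite /dualmap => /eqP; rewrite oppr_eq0 => /eqP.
- move=> g [lg dg]; split.
  + move=> h0.
    have g1 : forall m, g (d1 m) = 0.
      by move=> m; have := h0 m; rewrite /dualmap => /eqP; rewrite oppr_eq0 => /eqP.
    have wd : forall n n', d2 n = d2 n' -> g n = g n'.
      move=> n n' e; apply/eqP; rewrite -subr_eq0 -(clB lg); apply/eqP.
      have : d2 (n - n') = 0 by rewrite (clB l2) e subrr.
      by move/(ex2 _) => [m ->]; apply: g1.
    pose f p := - g (epsilon (inhabits (0 : N)) (fun n => p = d2 n)).
    have fE : forall n, f (d2 n) = - g n.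
      move=> n; rewrite /f; congr (- _); apply: wd.
      by rewrite -(epsilon_spec (inhabits (0 : N)) (fun n' => d2 n = d2 n') (ex_intro _ n erefl)).
    exists f.
      split.
        move=> a p p'; have [n ->] := surj2 p; have [n' ->] := surj2 p'.
        by rewrite -l2 !fE lg opprD scalerN.
      by move=> p; have [n ->] := surj2 p; rewrite -dd2 !fE dg mulrN.
    by move=> n; rewrite /dualmap fE opprK.
  + move=> [f [lf df] hg] m.
    rewrite /dualmap hg /dualmap.
    have -> : d2 (d1 m) = 0 by apply/(ex2 _); exists m.
    by rewrite (cl0 lf) oppr0 oppr0.
- move=> h [lh dh].
  pose S := img d1.
  have sS : submod (mgr SN) S.
    split.
    + by exists 0; rewrite (cl0 l1).
    + by move=> x y [m ->] [m' ->]; exists (m + m'); rewrite (clD l1).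
    + by move=> c x [m ->]; exists (c *: m); rewrite (clZ l1).
    + by move=> x [m ->]; exists (dd (mgr SM) m); rewrite dd1.
  have tS : satur (mgr SN) S by exact: tfN.
  have [gens hgens] := fgN.
  have [T [sT hST hdec]] : exists T, [/\ submod (mgr SN) T,
      (forall t, S t -> T t -> t = 0) &
      (forall n, exists s t, [/\ S s, T t & n = s + t])].
    apply: (compl (gs := gens) sS tS) => n.
    have [cs [s [hs ->]]] := hgens n.
    by exists (fun i => cs`_i), s.
  pose phi n := - h (epsilon (inhabits (0 : M)) (fun m => n = d1 m)).
  have phiE : forall m, phi (d1 m) = - h m.
    move=> m; rewrite /phi; congr (- h _); apply: inj1; symmetry.
    exact: (epsilon_spec (inhabits (0 : M)) (fun m' => d1 m = d1 m') (ex_intro _ m erefl)).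
  have hl : forall a s s', S s -> S s' ->
      phi (a *: s + s') = a *: phi s + phi s'.
    move=> a s s' [m ->] [m' ->].
    by rewrite -l1 !phiE lh opprD scalerN.
  have hd : forall s, S s -> phi (dd (mgr SN) s) = 'X * phi s.
    by move=> s [m ->]; rewrite -dd1 !phiE dh mulrN.
  have [g [cg hg]] := extend sS sT hST hdec hl hd.
  exists g => // m.
  rewrite /dualmap (hg (d1 m)) ?phiE ?opprK //; by exists m.
Qed.
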